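(* Let $L$ be a consistent pretransitive logic, $k\le\omega$, and $\mathfrak F$ the $k$-canonical frame of $L$. (1) For every point $x$ of $\mathfrak F$ and every $0\le h<\omega$: the depth of $x$ in $\mathfrak F$ is at most $h$ iff $B_h(\psi_1,\dots,\psi_h)\in x$ for all $k$-formulas $\psi_1,\dots,\psi_h$ (where $B_h(\psi_1,\dots,\psi_h)$ is obtained from $B_h$ by substituting $\psi_j$ for $p_j$). (2) For $0<h<\omega$, the $k$-canonical frame of $L[h]$ coincides with $\mathfrak F^{(h)}$, the restriction of $\mathfrak F$ to its points of depth at most $h$.
   Context: Logics are normal $n$-modal logics; a $k$-formula uses only $p_j$, $j<k$. $\Diamond^0\varphi=\varphi$, $\Diamond^{i+1}\varphi=\Diamond^i(\bigvee_{j<n}\Diamond_j\varphi)$, $\Diamond^{\le m}\varphi=\bigvee_{i\le m}\Diamond^i\varphi$. $L$ is pretransitive if $L\vdash\Diamond^{m+1}p\to\Diamond^{\le m}p$ for some $m$; for the least such $m$, $\Diamond^*=\Diamond^{\le m}$, $\Box^*=\neg\Diamond^*\neg$. $B_0=\bot$, $B_{i+1}=p_{i+1}\to\Box^*(\Diamond^*p_{i+1}\vee B_i)$; $L[h]=L+B_h$. The $k$-canonical frame of a consistent $L$ has points the maximal $L$-consistent sets of $k$-formulas, $xR_iy$ iff $\Diamond_i\psi\in x$ for all $k$-formulas $\psi\in y$. For a frame $\mathfrak F=(W,(R_i)_{i<n})$, $R_{\mathfrak F}=\bigcup R_i$, $R^*_{\mathfrak F}$ its reflexive transitive closure; clusters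 are the classes of $R^*_{\mathfrak F}\cap(R^*_{\mathfrak F})^{-1}$, ordered by $C\le D$ iff $xR^*_{\mathfrak F}y$ for some $x\in C,y\in D$ (the skeleton). A poset has height $h$ if it has a chain of $h$ elements and none longer; the height of a frame is the height of its skeleton. The restriction $\mathfrak F\restriction V=(V,(R_i\cap V^2)_{i<n})$; the depth of $x$ is the height of $\mathfrak F\restriction R^*_{\mathfrak F}(x)$. *)

(* Defs.v *)
From mathcomp Require Import all_boot.
Set Implicit Arguments. Unset Strict Implicit. Unset Printing Implicit Defensive.

Inductive form (n : nat) : Type :=
| Var of nat
| Bot
| Imp of form n & form n
| Box of 'I_n & form n.
Arguments Var {n} _.
Arguments Bot {n}.

Section Syntax.
Variable n : nat.
Definition Not (a : form n) : form n := Imp a Bot.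
Definition Top : form n := Imp Bot Bot.
Definition Or (a b : form n) : form n := Imp (Not a) b.
Definition And (a b : form n) : form n := Not (Imp a (Not b)).
Definition Dia (i : 'I_n) (a : form n) : form n := Not (Box i (Not a)).
Definition bigOr (s : seq (form n)) : form n := foldr Or Bot s.
Definition bigAnd (s : seq (form n)) : form n := foldr And Top s.

Definition diaAll (a : form n) : form n := bigOr [seq Dia j a | j <- enum 'I_n].
Fixpoint diaPow (i : nat) (a : form n) : form n :=
  match i with 0 => a | i'.+1 => diaPow i' (diaAll a) end.
Definition diaLe (m : nat) (a : form n) : form n :=
  bigOr [seq diaPow i a | i <- iota 0 m.+1].

Fixpoint subst (s : nat -> form n) (a : form n) : form n :=
  match a with
  | Var j => s j
  | Bot => Bot
  | Imp b c => Imp (subst s b) (subst s c)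
  | Box i b => Box i (subst s b)
  end.

(* k <= omega encoded as option nat, None = omega; k-formula: only p_j, j < k *)
Definition kvar (k : option nat) (j : nat) : bool :=
  if k is Some m then j < m else true.
Fixpoint kform (k : option nat) (a : form n) : bool :=
  match a with
  | Var j => kvar k j
  | Bot => true
  | Imp b c => kform k b && kform k c
  | Box _ b => kform k b
  end.

(* propositional tautologies: modal subformulas treated as atoms *)
Fixpoint peval (v : form n -> bool) (a : form n) : bool :=
  match a with
  | Var _ => v a
  | Bot => false
  | Imp b c => peval v b ==> peval v c
  | Box _ _ => v a
  end.
Definition tautology (a : form n) : Prop := forall v, peval v a.

Definition normal_logic (L : form n -> Prop) : Prop :=
  [/\ (forall a, tautology a -> L a),
      (forall i : 'I_n, L (Imp (Box i (Imp (Var 0) (Var 1)))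
                               (Imp (Box i (Var 0)) (Box i (Var 1))))),
      (forall a b, L (Imp a b) -> L a -> L b),
      (forall (i : 'I_n) a, L a -> L (Box i a)) &
      (forall s a, L a -> L (subst s a))].

Definition consistent_logic (L : form n -> Prop) : Prop := ~ L Bot.

Definition pt_at (L : form n -> Prop) (m : nat) : Prop :=
  L (Imp (diaPow m.+1 (Var 0)) (diaLe m (Var 0))).
Definition pretransitive (L : form n -> Prop) : Prop := exists m, pt_at L m.
(* m is the least witness of pretransitivity; then Dia^* = Dia^{<= m} *)
Definition least_pt (L : form n -> Prop) (m : nat) : Prop :=
  pt_at L m /\ forall m', m' < m -> ~ pt_at L m'.

Definition diaStar (m : nat) (a : form n) : form n := diaLe m a.
Definition boxStar (m : nat) (a : form n) : form n := Not (diaStar m (Not a)).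

Fixpoint Bh (m : nat) (i : nat) : form n :=
  match i with
  | 0 => Bot
  | i'.+1 => Imp (Var i) (boxStar m (Or (diaStar m (Var i)) (Bh m i')))
  end.

(* L + A : the least normal logic containing L and A (L assumed normal) *)
Inductive ext (L : form n -> Prop) (A : form n) : form n -> Prop :=
| ext_L a : L a -> ext L A a
| ext_A : ext L A A
| ext_MP a b : ext L A (Imp a b) -> ext L A a -> ext L A b
| ext_Nec (i : 'I_n) a : ext L A a -> ext L A (Box i a)
| ext_Sub s a : ext L A a -> ext L A (subst s a).

Fixpoint inlist (a : form n) (s : seq (form n)) : Prop :=
  if s is b :: s' then b = a \/ inlist a s' else False.

Definition Lconsistent (L : form n -> Prop) (x : form n -> Prop) : Prop :=
  forall s : seq (form n), (forall a, inlist a s -> x a) -> ~ L (Not (bigAnd s)).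

Definition mcs (L : form n -> Prop) (k : option nat) (x : form n -> Prop) : Prop :=
  [/\ (forall a, x a -> kform k a),
      Lconsistent L x &
      (forall a, kform k a -> ~ x a ->
         ~ Lconsistent L (fun b => x b \/ b = a))].

Definition canon_rel (k : option nat) (i : 'I_n) (x y : form n -> Prop) : Prop :=
  forall psi, kform k psi -> y psi -> x (Dia i psi).
End Syntax.

Record frame (n : nat) := Frame { fW : Type; fR : 'I_n -> fW -> fW -> Prop }.
Arguments Frame {n} fW fR.
Arguments fW {n} f.
Arguments fR {n} f i _ _.

Inductive rtc (T : Type) (R : T -> T -> Prop) : T -> T -> Prop :=
| rtc_refl x : rtc R x x
| rtc_step x y z : R x y -> rtc R y z -> rtc R x z.

Section Frames.
Variables (n : nat) (F : frame n).
Definition RF (a b : fW F) : Prop := exists i, fR F i a b.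
Definition Rstar : fW F -> fW F -> Prop := rtc RF.
Definition cluster_of (x : fW F) : fW F -> Prop := fun y => Rstar x y /\ Rstar y x.
Definition is_cluster (C : fW F -> Prop) : Prop := exists x, C = cluster_of x.
Definition skeleton : Type := {C : fW F -> Prop | is_cluster C}.
Definition skel_le (C D : skeleton) : Prop :=
  exists x y, sval C x /\ sval D y /\ Rstar x y.
Definition restrict (V : fW F -> Prop) : frame n :=
  Frame {w : fW F | V w} (fun i a b => fR F i (sval a) (sval b)).
End Frames.

Definition has_chain (T : Type) (le : T -> T -> Prop) (h : nat) : Prop :=
  exists f : 'I_h -> T, injective f /\ forall i j, le (f i) (f j) \/ le (f j) (f i).
Definition has_height (T : Type) (le : T -> T -> Prop) (h : nat) : Prop :=
  has_chain le h /\ forall h', h < h' -> ~ has_chain le h'.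
Definition frame_height (n : nat) (F : frame n) (h : nat) : Prop :=
  has_height (@skel_le n F) h.
Definition depth_le (n : nat) (F : frame n) (x : fW F) (h : nat) : Prop :=
  exists h', h' <= h /\ frame_height (restrict (Rstar x)) h'.

Definition canon (n : nat) (L : form n -> Prop) (k : option nat) : frame n :=
  Frame {x : form n -> Prop | mcs L k x} (fun i a b => canon_rel k i (sval a) (sval b)).

Definition restrict_depth (n : nat) (F : frame n) (h : nat) : frame n :=
  restrict (fun w : fW F => depth_le w h).

(* Main.v *)
Require Import Defs.
From mathcomp Require Import all_boot.
From Stdlib Require List.
From mathcomp Require Import zify.
From Stdlib Require Import Lia.
From Stdlib Require Import Classical ProofIrrelevance FunctionalExtensionality PropExtensionality.
Set Implicit Arguments. Unset Strict Implicit. Unset Printing Implicit Defensive.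
Ltac btaut := simpl; repeat match goal with
  | |- context [peval ?v ?x] => case: (peval v x)
  | |- context [?v (Box ?i ?x)] => case: (v (Box i x))
  | |- context [?v (Var ?j)] => case: (v (Var j))
  end; try done.
Section Prop1.
Variable n : nat.
Implicit Types (a b c : form n) (s t : seq (form n)).

Lemma inlist_In a s : inlist a s <-> List.In a s.
Proof. by elim: s => //= b s ->. Qed.

Lemma inlist_map (T : Type) (f : T -> form n) b (s : seq T) :
  inlist b (map f s) <-> exists j, f j = b /\ List.In j s.
Proof.
elim: s => [|c s IH] /=; first by split=> // [[j []]].
split.
  case=> [Hc|Hin]; first by exists c; split=> //; left.
  by have [j [H1 H2]] := proj1 IH Hin; exists j; split=> //; right.
move=> [j [Hj [Hc|H]]]; first by left; rewrite Hc.
by right; apply/IH; exists j.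
Qed.

Lemma inlist_cat a s t : inlist a (s ++ t) <-> inlist a s \/ inlist a t.
Proof. rewrite !inlist_In; exact: List.in_app_iff. Qed.

Lemma peval_Not v a : peval v (Not a) = ~~ peval v a.
Proof. by rewrite /= implybF. Qed.
Lemma peval_Or v a b : peval v (Or a b) = peval v a || peval v b.
Proof. by rewrite /=; case: (peval v a); case: (peval v b). Qed.
Lemma peval_And v a b : peval v (And a b) = peval v a && peval v b.
Proof. by rewrite /=; case: (peval v a); case: (peval v b). Qed.
Lemma peval_Top v : peval v (@Top n) = true.
Proof. by []. Qed.

Lemma peval_bigAnd v s : peval v (bigAnd s) <-> (forall a, inlist a s -> peval v a).
Proof.
elim: s => [|b s IH]; first by split.
change (bigAnd (b::s)) with (And b (bigAnd s)); rewrite peval_And; split.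
  by move/andP=> [Hb /IH Hs] a [<-|]; [|apply: Hs].
move=> H; apply/andP; split; first by apply: H; left.
by apply/IH => a Ha; apply: H; right.
Qed.

Lemma peval_bigOr v s : peval v (bigOr s) <-> (exists a, inlist a s /\ peval v a).
Proof.
elim: s => [|b s IH]; first by split=> // [[a []]].
change (bigOr (b::s)) with (Or b (bigOr s)); rewrite peval_Or; split.
  case/orP=> [Hb|/IH [a [Ha1 Ha2]]]; first by exists b; split=> //; left.
  by exists a; split=> //; right.
move=> [a [[<-|Ha] Hv]]; first by rewrite Hv.
by apply/orP; right; apply/IH; exists a.
Qed.

Lemma peval_bigAnd_cat v s t : peval v (bigAnd (s ++ t)) = peval v (bigAnd s) && peval v (bigAnd t).
Proof. elim: s => //= b s IH.
change (peval v (And b (bigAnd (s ++ t))) = peval v (And b (bigAnd s)) && peval v (bigAnd t)).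
by rewrite !peval_And IH andbA. Qed.

Definition subP (P : form n -> Prop) s := forall a, inlist a s -> P a.

Lemma subP_cat P s t : subP P (s ++ t) <-> subP P s /\ subP P t.
Proof.
split.
  by move=> H; split=> a Ha; apply: H; apply/inlist_cat; [left|right].
by move=> [H1 H2] a /inlist_cat [] ?; [apply: H1|apply: H2].
Qed.

Lemma split_list (P Q : form n -> Prop) s : subP (fun a => P a \/ Q a) s ->
  exists s1 s2, subP P s1 /\ subP Q s2 /\
   forall v, peval v (bigAnd s1) -> peval v (bigAnd s2) -> peval v (bigAnd s).
Proof.
elim: s => [|b s IH] H.
  by exists [::], [::]; do 2 split=> //.
have [s1 [s2 [H1 [H2 H3]]]] : exists s1 s2, subP P s1 /\ subP Q s2 /\
   forall v, peval v (bigAnd s1) -> peval v (bigAnd s2) -> peval v (bigAnd s).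
  by apply: IH => a Ha; apply: H; right.
have [Pb|Qb] : P b \/ Q b by apply: H; left.
  exists (b :: s1), s2; split; first by move=> a [<-|]; [|apply: H1].
  split; first exact: H2.
  move=> v; change (peval v (And b (bigAnd s1)) -> peval v (bigAnd s2) -> peval v (And b (bigAnd s))).
  by rewrite !peval_And => /andP [-> Hs1] Hs2; rewrite H3.
exists s1, (b :: s2); split; first exact: H1.
split; first by move=> a [<-|]; [|apply: H2].
move=> v Hs1; change (peval v (And b (bigAnd s2)) -> peval v (And b (bigAnd s))).
by rewrite !peval_And => /andP [-> Hs2]; rewrite H3.
Qed.

Lemma kform_bigAnd k s : kform k (bigAnd s) <-> subP (kform k) s.
Proof.
elim: s => [|b s IH] /=; first by split=> // _ ? [].
rewrite !andbT; split.
  by move/andP=> [Hb /IH Hs] a [<-|]; [|apply: Hs].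
move=> H; apply/andP; split; first by apply: H; left.
by apply/IH => a Ha; apply: H; right.
Qed.

Lemma kform_bigOr k s : kform k (bigOr s) <-> subP (kform k) s.
Proof.
elim: s => [|b s IH] /=; first by split=> // _ ? [].
rewrite !andbT; split.
  by move/andP=> [Hb /IH Hs] a [<-|]; [|apply: Hs].
move=> H; apply/andP; split; first by apply: H; left.
by apply/IH => a Ha; apply: H; right.
Qed.

End Prop1.
Section Logic.
Variable n : nat.
Variable L : form n -> Prop.
Hypothesis HL : normal_logic L.
Implicit Types (a b c : form n) (s t : seq (form n)).

Lemma Ltaut a : tautology a -> L a. Proof. by case: HL => H _ _ _ _; apply: H. Qed.
Lemma Lmp a b : L (Imp a b) -> L a -> L b. Proof. by case: HL => _ _ H _ _; apply: H. Qed.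
Lemma Lnec i a : L a -> L (Box i a). Proof. by case: HL => _ _ _ H _; apply: H. Qed.
Lemma Lsub (s : nat -> form n) a : L a -> L (subst s a). Proof. by case: HL => _ _ _ _ H; apply: H. Qed.
Lemma LK i a b : L (Imp (Box i (Imp a b)) (Imp (Box i a) (Box i b))).
Proof.
case: HL => _ H _ _ _.
exact: (Lsub (fun j => if j is 0 then a else b) (H i)).
Qed.

Lemma taut_mp a b : (forall v, peval v a -> peval v b) -> L a -> L b.
Proof. move=> H; apply: Lmp; apply: Ltaut => v /=; apply/implyP; apply: H. Qed.

Lemma taut_mp2 a b c : (forall v, peval v a -> peval v b -> peval v c) -> L a -> L b -> L c.
Proof.
move=> H Ha; apply: Lmp; move: Ha; apply: taut_mp => v Ha /=; apply/implyP; exact: H.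
Qed.

Lemma taut_L a : (forall v, peval v a) -> L a.
Proof. by move=> H; apply: Ltaut. Qed.

Lemma box_mono i a b : L (Imp a b) -> L (Imp (Box i a) (Box i b)).
Proof. move=> H; apply: Lmp (LK i a b) (Lnec i H). Qed.

Lemma box_K2 i a b c : L (Imp a (Imp b c)) -> L (Imp (Box i a) (Imp (Box i b) (Box i c))).
Proof.
move=> H; have H1 := box_mono i H; have H2 := LK i b c.
apply: taut_mp2 H1 H2 => v; btaut.
Qed.

Lemma box_bigAnd i s : L (Imp (bigAnd (map (Box i) s)) (Box i (bigAnd s))).
Proof.
elim: s => [|b s IH] /=.
  apply: taut_mp (Lnec i (taut_L (fun v => isT : peval v (@Top n)))) => v; btaut.
have T : L (Imp b (Imp (bigAnd s) (And b (bigAnd s)))) by apply: taut_L => v; btaut.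
have H := box_K2 i T.
apply: (taut_mp2 _ IH H) => v.
change (peval v (bigAnd [seq Box i i0 | i0 <- s]) ==> peval v (Box i (bigAnd s)) ->
  peval v (Imp (Box i b) (Imp (Box i (bigAnd s)) (Box i (And b (bigAnd s))))) ->
  peval v (Imp (And (Box i b) (bigAnd [seq Box i i0 | i0 <- s])) (Box i (And b (bigAnd s))))).
btaut.
Qed.

Lemma dia_mono i a b : L (Imp a b) -> L (Imp (Dia i a) (Dia i b)).
Proof.
move=> H; have H1 : L (Imp (Not b) (Not a)).
  by apply: taut_mp H => v; btaut.
have := box_mono i H1; apply: taut_mp => v; btaut.
Qed.

End Logic.
Section MCS.
Variable n : nat.
Variable L : form n -> Prop.
Hypothesis HL : normal_logic L.
Variable k : option nat.
Implicit Types (a b c : form n) (s t : seq (form n)).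
Variable x : form n -> Prop.
Hypothesis Hx : mcs L k x.

Lemma mcs_k a : x a -> kform k a. Proof. by case: Hx => H _ _; apply: H. Qed.
Lemma mcs_cons : forall s, subP x s -> ~ L (Not (bigAnd s)). Proof. by case: Hx. Qed.

Lemma mcs_max a : kform k a -> ~ x a ->
  exists t, subP x t /\ L (Imp a (Not (bigAnd t))).
Proof.
case: Hx => _ _ H Hk Hna; have := H a Hk Hna.
move=> Hnc; apply: NNPP => Hne; apply: Hnc => u Hu Hu2.
have [s1 [s2 [H1 [H2 H3]]]] := split_list Hu.
apply: Hne; exists s1; split=> //.
apply: (taut_mp HL) Hu2 => v /=; rewrite !implybF => Hn; apply/implyP => Ha; apply/negP => Hs1.
have Hs2 : peval v (bigAnd s2) by apply/peval_bigAnd => b /H2 ->.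
by move: Hn; rewrite H3.
Qed.

Lemma mcs_closed s b : subP x s -> L (Imp (bigAnd s) b) -> kform k b -> x b.
Proof.
move=> Hs Hb Hk; apply: NNPP => Hnb.
have [t [Ht Hbt]] := mcs_max Hk Hnb.
apply: (@mcs_cons (s ++ t)); first by apply/subP_cat.
apply: (taut_mp2 HL) Hb Hbt => v; rewrite peval_Not peval_bigAnd_cat; btaut.
Qed.

Lemma mcs_L a : L a -> kform k a -> x a.
Proof.
move=> Ha; apply: (@mcs_closed [::]) => //.
by apply: (taut_mp HL) Ha => v; btaut.
Qed.

Lemma mcs_cons2 a : x a -> x (Not a) -> False.
Proof.
move=> H1 H2; apply: (@mcs_cons [:: a; Not a]); first by move=> b [<-|[<-|]].
by apply: (taut_L HL) => v; btaut.
Qed.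

Lemma mcs_bot : ~ x Bot.
Proof. move=> H; apply: (@mcs_cons [:: Bot]); first by move=> b [<-|]. by apply: (taut_L HL) => v. Qed.

Lemma mcs_neg a : kform k a -> x a \/ x (Not a).
Proof.
move=> Hk; case: (classic (x a)) => Ha; [by left|right].
have [t [Ht Hbt]] := mcs_max Hk Ha.
apply: (mcs_closed Ht) => //; last by rewrite /= Hk.
by apply: (taut_mp HL) Hbt => v; btaut.
Qed.

Lemma mcs_mp a b : x (Imp a b) -> x a -> x b.
Proof.
move=> H1 H2; have /= /andP [_ Hk] := mcs_k H1.
apply: (@mcs_closed [:: Imp a b; a]) => //; first by move=> c [<-|[<-|]].
by apply: (taut_L HL) => v; btaut.
Qed.

Lemma mcs_imp a b : kform k a -> kform k b -> (x (Imp a b) <-> (x a -> x b)).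
Proof.
move=> Ha Hb; split; first exact: mcs_mp.
move=> H; case: (mcs_neg Ha) => Hxa.
  apply: (@mcs_closed [:: b]); first by move=> c [<-|] //; apply: H.
  by apply: (taut_L HL) => v; btaut. by rewrite /= Ha Hb.
apply: (@mcs_closed [:: Not a]); first by move=> c [<-|].
  by apply: (taut_L HL) => v; btaut. by rewrite /= Ha Hb.
Qed.

Lemma mcs_not a : kform k a -> (x (Not a) <-> ~ x a).
Proof.
move=> Ha; split; first by move=> H1 H2; apply: mcs_cons2 H2 H1.
by case: (mcs_neg Ha).
Qed.

Lemma mcs_or a b : kform k a -> kform k b -> (x (Or a b) <-> x a \/ x b).
Proof.
move=> Ha Hb; have Hna : kform k (Not a) by rewrite /= Ha.
rewrite /Or mcs_imp // mcs_not //; split.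
  by move=> H; case: (classic (x a)) => H1; [left|right; apply: H].
by case=> H1 H2 //; case: H2.
Qed.

Lemma mcs_and a b : kform k a -> kform k b -> (x (And a b) <-> x a /\ x b).
Proof.
move=> Ha Hb; have Hnb : kform k (Not b) by rewrite /= Hb.
have Hi : kform k (Imp a (Not b)) by rewrite /= Ha Hb.
rewrite /And mcs_not // mcs_imp // mcs_not //; split.
  move=> H; split; apply: NNPP => H1; apply: H => // H2; by case: H1.
by move=> [H1 H2] H; apply: (H H1).
Qed.

Lemma mcs_bigOr s : kform k (bigOr s) -> (x (bigOr s) <-> exists a, inlist a s /\ x a).
Proof.
elim: s => [|b s IH] Hk.
  by split=> [/mcs_bot|[a []]].
move: Hk; rewrite /= !andbT => /andP [Hb Hs].
change (x (Or b (bigOr s)) <-> exists a, inlist a (b :: s) /\ x a).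
rewrite mcs_or // IH //; split.
  by case=> [Hxb|[a [H1 H2]]]; [exists b; split=> //; left|exists a; split=> //; right].
by move=> [a [[<-|H1] H2]]; [left|right; exists a].
Qed.

Lemma mcs_bigAnd s : kform k (bigAnd s) -> (x (bigAnd s) <-> subP x s).
Proof.
elim: s => [|b s IH] Hk.
  split=> [_ a []|_]; apply: mcs_L => //; by apply: (taut_L HL).
move: Hk; rewrite /= !andbT => /andP [Hb Hs].
change (x (And b (bigAnd s)) <-> subP x (b :: s)).
rewrite (mcs_and Hb Hs) (IH Hs); split.
  by move=> [H1 H2] a [<-|/H2].
by move=> H; split; [apply: H; left|move=> a Ha; apply: H; right].
Qed.

End MCS.
Section Enum.
Variable n : nat.

Fixpoint enc (a : form n) : GenTree.tree nat :=
  match a with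
  | Var j => GenTree.Node 0 [:: GenTree.Leaf j]
  | Bot => GenTree.Node 1 [::]
  | Imp b c => GenTree.Node 2 [:: enc b; enc c]
  | Box i b => GenTree.Node 3 [:: GenTree.Leaf (nat_of_ord i); enc b]
  end.

Fixpoint dec (t : GenTree.tree nat) : option (form n) :=
  match t with
  | GenTree.Node 0 [:: GenTree.Leaf j] => Some (Var j)
  | GenTree.Node 1 [::] => Some Bot
  | GenTree.Node 2 [:: t1; t2] =>
      match dec t1, dec t2 with Some a, Some b => Some (Imp a b) | _, _ => None end
  | GenTree.Node 3 [:: GenTree.Leaf i; t1] =>
      match insub i, dec t1 with Some i', Some a => Some (Box i' a) | _, _ => None end
  | _ => None
  end.

Lemma encK : pcancel enc dec.
Proof.
elim=> //= [b -> c ->|i b ->] //.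
by rewrite valK.
Qed.

Definition enumf (j : nat) : form n :=
  match unpickle j with Some t => odflt Bot (dec t) | None => Bot end.

Lemma enumf_surj a : exists j, enumf j = a.
Proof. by exists (pickle (enc a)); rewrite /enumf pickleK encK. Qed.
End Enum.

Section Lindenbaum.
Variable n : nat.
Variable L : form n -> Prop.
Variable k : option nat.
Variable G : form n -> Prop.

Fixpoint lchain (i : nat) : form n -> Prop :=
  match i with
  | 0 => G
  | i'.+1 => fun b => lchain i' b \/
      (b = enumf n i' /\ kform k (enumf n i') /\
       Lconsistent L (fun c => lchain i' c \/ c = enumf n i'))
  end.

Lemma Lcons_sub (P Q : form n -> Prop) : (forall a, P a -> Q a) ->
  Lconsistent L Q -> Lconsistent L P.
Proof. by move=> H HQ s Hs; apply: HQ => a /Hs /H. Qed.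

Lemma lchain_mono i j a : i <= j -> lchain i a -> lchain j a.
Proof.
move=> /subnK <-; elim: (j - i) => // d IH H; rewrite addSn /=; left; exact: IH.
Qed.

Hypothesis HG : Lconsistent L G.
Hypothesis HGk : forall a, G a -> kform k a.

Lemma lchain_cons i : Lconsistent L (lchain i).
Proof.
elim: i => // i IH.
case: (classic (kform k (enumf n i) /\
       Lconsistent L (fun c => lchain i c \/ c = enumf n i))) => [[_ H]|H].
  by apply: Lcons_sub H => a /= [|[-> _]]; [left|right].
by apply: Lcons_sub IH => a /= [//|[-> [H1 H2]]]; case: H.
Qed.

Definition lmax (a : form n) : Prop := exists i, lchain i a.

Lemma lindenbaum : exists x, mcs L k x /\ forall a, G a -> x a.
Proof.
exists lmax; split; last by move=> a Ha; exists 0.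
split.
- move=> a [i]; elim: i a => [|i IH] a /=; first exact: HGk.
  by case=> [/IH|[-> [H _]]].
- move=> s Hs.
  have [i Hi] : exists i, subP (lchain i) s.
    elim: s Hs => [|b s IH] Hs; first by exists 0.
    have [i Hi] := IH (fun a Ha => Hs a (or_intror Ha)).
    have [j Hj] := Hs b (or_introl erefl).
    exists (maxn i j) => a [<-|Ha].
      by apply: lchain_mono Hj; rewrite leq_maxr.
    by apply: lchain_mono (Hi a Ha); rewrite leq_maxl.
  exact: lchain_cons Hi.
- move=> a Hk Hna Hc.
  have [i Hi] := enumf_surj a.
  apply: Hna; exists i.+1; right; rewrite Hi; split=> //; split=> //.
  apply: Lcons_sub Hc => c [Hc|->]; [left; by exists i|by right].
Qed.
End Lindenbaum.
Lemma rtc_trans T (R : T -> T -> Prop) x y z : rtc R x y -> rtc R y z -> rtc R x z.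
Proof. elim=> // a b c Hab _ IH Hcz; apply: rtc_step Hab (IH Hcz). Qed.

Lemma rtc_one T (R : T -> T -> Prop) x y : R x y -> rtc R x y.
Proof. move=> H; apply: rtc_step H (rtc_refl _ _). Qed.

Section Frames2.
Variable n : nat.

Fixpoint spath (F : frame n) (x : fW F) (l : nat) : Prop :=
  match l with
  | 0 => True
  | l'.+1 => exists y, Rstar x y /\ ~ Rstar y x /\ spath y l'
  end.

Variable F : frame n.

Lemma rstar_trans (x y z : fW F) : Rstar x y -> Rstar y z -> Rstar x z.
Proof. exact: rtc_trans. Qed.
Lemma rstar_refl (x : fW F) : Rstar x x.
Proof. exact: rtc_refl. Qed.

Lemma spath_trunc (x : fW F) l l' : l' <= l -> spath x l -> spath x l'.
Proof.
elim: l x l' => [|l IH] x [|l'] //= Hl [y [H1 [H2 H3]]].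
by exists y; split=> //; split=> //; apply: IH H3.
Qed.

Lemma spath_pre (x y : fW F) l : Rstar x y -> spath y l -> spath x l.
Proof.
case: l => [//|l] Hxy [z [H1 [H2 H3]]].
exists z; split; first exact: rstar_trans Hxy H1.
split=> // Hzx; apply: H2; exact: rstar_trans Hzx Hxy.
Qed.

Lemma cl_eq (x y : fW F) : Rstar x y -> Rstar y x -> cluster_of x = cluster_of y.
Proof.
move=> H1 H2; apply: functional_extensionality => z; apply: propositional_extensionality.
rewrite /cluster_of; split=> [[H3 H4]|[H3 H4]]; split.
- exact: rstar_trans H2 H3.
- exact: rstar_trans H4 H1.
- exact: rstar_trans H1 H3.
- exact: rstar_trans H4 H2.
Qed.

Lemma skel_eq (C D : skeleton F) : sval C = sval D -> C = D.
Proof.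
case: C => C pC; case: D => D pD /= E; subst D; f_equal; apply: proof_irrelevance.
Qed.

Lemma skel_le_iff (C D : skeleton F) c d : sval C = cluster_of c -> sval D = cluster_of d ->
  (skel_le C D <-> Rstar c d).
Proof.
move=> EC ED; rewrite /skel_le EC ED; split.
  move=> [a [b [[Ha _] [[_ Hb] Hab]]]].
  exact: rstar_trans Ha (rstar_trans Hab Hb).
move=> H; exists c, d; split; first by split; apply: rstar_refl.
by split=> //; split; apply: rstar_refl.
Qed.

Lemma skel_rep (C : skeleton F) : exists c, sval C = cluster_of c.
Proof. by case: C => C [c E]; exists c. Qed.

Lemma skel_le_trans (C D E : skeleton F) : skel_le C D -> skel_le D E -> skel_le C E.
Proof.
have [c Hc] := skel_rep C; have [d Hd] := skel_rep D; have [e He] := skel_rep E.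
rewrite !(skel_le_iff Hc Hd) (skel_le_iff Hd He) (skel_le_iff Hc He).
exact: rstar_trans.
Qed.

Lemma spath_seq (x : fW F) l : spath x l -> exists p : nat -> fW F, p 0 = x /\
  forall t, t < l -> Rstar (p t) (p t.+1) /\ ~ Rstar (p t.+1) (p t).
Proof.
elim: l x => [|l IH] x /=.
  by move=> _; exists (fun _ => x).
move=> [y [H1 [H2 /IH [p [Hp0 Hp]]]]].
exists (fun t => if t is t'.+1 then p t' else x); split=> // [[|t]] Ht /=.
  by rewrite Hp0.
exact: Hp.
Qed.

Lemma spath_chain (x : fW F) l : spath x l -> has_chain (@skel_le n F) l.+1.
Proof.
move=> /spath_seq [p [_ Hp]].
have Hle : forall s t, s <= t -> t <= l -> Rstar (p s) (p t).
  move=> s t; elim: t => [|t IH]; first by rewrite leqn0 => /eqP -> _; apply: rstar_refl.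
  rewrite leq_eqVlt ltnS => /orP [/eqP ->|Hst] Htl; first by apply: rstar_refl.
  exact: rstar_trans (IH Hst (ltnW Htl)) (proj1 (Hp t Htl)).
have Hlt : forall s t, s < t -> t <= l -> ~ Rstar (p t) (p s).
  move=> s [//|t] Hst Htl H.
  apply: (proj2 (Hp t Htl)); exact: rstar_trans H (Hle s t Hst (ltnW Htl)).
pose f (i : 'I_l.+1) : skeleton F := exist _ (cluster_of (p i)) (ex_intro _ (p i) erefl).
exists f; split.
  move=> i j /(f_equal sval) /= E.
  have : cluster_of (p i) (p j) by rewrite E; split; apply: rstar_refl.
  move=> [H1 H2]; apply: val_inj => /=.
  case: (ltngtP i j) => // Hij.
    by case: (Hlt _ _ Hij (ltnSE (ltn_ord j))).
  by case: (Hlt _ _ Hij (ltnSE (ltn_ord i))).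
move=> i j; case: (leqP i j) => Hij.
  by left; apply/(skel_le_iff (C:=f i) (D := f j) erefl erefl); apply: Hle => //; rewrite -ltnS.
right; apply/(skel_le_iff (C:=f j) (D := f i) erefl erefl); apply: Hle; first exact: ltnW.
by rewrite -ltnS.
Qed.

Lemma min_ex T (le : T -> T -> Prop) : (forall a b c, le a b -> le b c -> le a c) ->
  forall N (g : 'I_N.+1 -> T), (forall i j, le (g i) (g j) \/ le (g j) (g i)) ->
  exists i0, forall i, le (g i0) (g i).
Proof.
move=> Htr; elim=> [|N IH] g Hg.
  exists ord0 => i; rewrite (ord1 i); by case: (Hg ord0 ord0).
have [i1 Hi1] := IH (fun t => g (lift ord0 t)) (fun i j => Hg _ _).
case: (Hg ord0 (lift ord0 i1)) => H.
  exists ord0 => i; case: (unliftP ord0 i) => [j ->|->].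
    exact: Htr H (Hi1 j).
  by case: (Hg ord0 ord0).
exists (lift ord0 i1) => i; case: (unliftP ord0 i) => [j ->|->]; [exact: Hi1|exact: H].
Qed.

Lemma chain_spath l : has_chain (@skel_le n F) l.+1 -> exists a : fW F, spath a l.
Proof.
suff : forall f : 'I_l.+1 -> skeleton F, injective f ->
   (forall i j, skel_le (f i) (f j) \/ skel_le (f j) (f i)) ->
   exists (a : fW F) t, sval (f t) = cluster_of a /\ spath a l.
  by move=> H [f [Hi Hc]]; have [a [_ [_ Ha]]] := H f Hi Hc; exists a.
elim: l => [|l IH] f Hinj Hcmp.
  by have [c Hc] := skel_rep (f ord0); exists c, ord0.
have [i0 Hi0] := min_ex (@skel_le_trans) Hcmp.
have [a [t [Ht Ha]]] := IH (fun t => f (lift i0 t))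
  (fun u v E => lift_inj (Hinj _ _ E)) (fun u v => Hcmp _ _).
have [x0 Hx0] := skel_rep (f i0).
exists x0, i0; split=> //; exists a; split.
  exact/(skel_le_iff Hx0 Ht).
split=> // Hax.
have : f i0 = f (lift i0 t).
  apply: skel_eq; rewrite Hx0 Ht; apply: cl_eq => //; exact/(skel_le_iff Hx0 Ht).
by move/Hinj => /eqP; rewrite (negbTE (neq_lift i0 t)).
Qed.

End Frames2.


Lemma sig_eqP T (P : T -> Prop) (a b : {w | P w}) : sval a = sval b -> a = b.
Proof. case: a => a pa; case: b => b pb /= E; subst b; f_equal; apply: proof_irrelevance. Qed.

Section Depth.
Variable n : nat.
Variable F : frame n.
Variable x : fW F.

Definition GG := restrict (Rstar x).

Lemma rstarG (a b : fW GG) : Rstar a b <-> Rstar (sval a) (sval b).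
Proof.
split.
  elim=> [c|c d e [i Hi] _ IH]; first exact: rstar_refl.
  apply: rtc_step IH; by exists i.
suff : forall w z, Rstar w z -> forall a : fW GG, sval a = w -> forall b : fW GG, sval b = z -> Rstar a b.
  by move=> H Hab; apply: H Hab a erefl b erefl.
clear a b; move=> w z; elim=> [c|c d e Hcd _ IH] a Ea b Eb.
  have -> : a = b by apply: sig_eqP; rewrite Ea Eb.
  exact: rstar_refl.
have Hd : Rstar x d.
  apply: rstar_trans (svalP a) _; rewrite Ea; exact: rtc_one.
apply: rtc_step (IH (exist _ d Hd) erefl b Eb).
case: Hcd => i Hi; exists i; rewrite /= Ea; exact: Hi.
Qed.

Lemma spathG l (a : fW GG) : spath a l <-> spath (sval a) l.
Proof.
elim: l a => [//|l IH] a /=; split.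
  move=> [y [H1 [H2 H3]]]; exists (sval y); split; first exact/rstarG.
  split; first by move=> H; apply: H2; apply/rstarG.
  exact/IH.
move=> [y [H1 [H2 H3]]].
have Hy : Rstar x y by apply: rstar_trans (svalP a) H1.
exists (exist _ y Hy); split; first exact/rstarG.
split; first by move=> /rstarG H; apply: H2.
by apply/IH.
Qed.

Lemma max_ex (P : nat -> Prop) h : P 0 ->
  exists j, j <= h /\ P j /\ forall j', j < j' <= h -> ~ P j'.
Proof.
move=> P0; elim: h => [|h [j [Hj [Pj Hmax]]]].
  by exists 0; split=> //; split=> // j' /andP [H1 H2]; move: H2; rewrite leqNgt H1.
case: (classic (P h.+1)) => H.
  by exists h.+1; split=> //; split=> // j' /andP [H1 H2]; move: H2; rewrite leqNgt H1.
exists j; split; first exact: leqW.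
split=> // j' /andP [H1 H2]; move: H2; rewrite leq_eqVlt => /orP [/eqP -> //|H2].
by apply: Hmax; rewrite H1 -ltnS.
Qed.

Lemma depth_iff h : depth_le x h <-> ~ spath x h.
Proof.
pose x' : fW GG := exist _ x (rstar_refl x).
split.
  move=> [h' [Hh [_ Hno]]] Hs.
  apply: (Hno h.+1); first by rewrite ltnS.
  by apply: (spath_chain (x := x')); apply/spathG.
move=> Hns.
have Hno : forall j, h < j -> ~ has_chain (@skel_le n GG) j.
  move=> [//|j] Hj /chain_spath [a /spathG Ha].
  apply: Hns; apply: spath_pre (svalP a) _.
  by apply: spath_trunc Ha; rewrite -ltnS.
have H0 : has_chain (@skel_le n GG) 0.
  have C0 : skeleton GG by exists (cluster_of x'); exists x'.
  exists (fun _ => C0); split; first by case.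
  by case.
have [j [Hj [Pj Hmax]]] := max_ex h H0.
exists j; split=> //; split=> // j' Hjj'.
case: (leqP j' h) => Hj'h.
  by apply: Hmax; rewrite Hjj'.
exact: Hno.
Qed.
End Depth.
Section Syn.
Variable n : nat.
Implicit Types (a b : form n) (s : nat -> form n).

Lemma diaPow_iter l a : diaPow l a = iter l (@diaAll n) a.
Proof. by elim: l a => //= l IH a; rewrite IH -iterSr. Qed.

Lemma diaPow_S l a : diaPow l.+1 a = diaAll (diaPow l a).
Proof. by rewrite !diaPow_iter. Qed.

Lemma diaPow_add i j a : diaPow (i + j) a = diaPow i (diaPow j a).
Proof. by rewrite !diaPow_iter iterD. Qed.

Lemma kform_diaAll k a : kform k a -> kform k (diaAll a).
Proof.
move=> Ha; apply/kform_bigOr => b /inlist_map [j [<- _]].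
by rewrite /= Ha.
Qed.

Lemma kform_diaPow k l a : kform k a -> kform k (diaPow l a).
Proof. by rewrite diaPow_iter; elim: l => //= l IH /IH /kform_diaAll. Qed.

Lemma kform_diaLe k l a : kform k a -> kform k (diaLe l a).
Proof.
move=> Ha; apply/kform_bigOr => b /inlist_map [j [<- _]].
exact: kform_diaPow.
Qed.

Lemma kform_boxStar k l a : kform k a -> kform k (boxStar l a).
Proof. move=> Ha; change (kform k (diaLe l (Not a)) && true); by rewrite kform_diaLe //= Ha. Qed.


Lemma subst_diaAll s a : subst s (diaAll a) = diaAll (subst s a).
Proof. rewrite /diaAll; elim: (enum 'I_n) => //= j e ->. by []. Qed.

Lemma subst_diaPow s l a : subst s (diaPow l a) = diaPow l (subst s a).
Proof. rewrite !diaPow_iter; elim: l => // l IH; by rewrite !iterS subst_diaAll IH. Qed.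

Lemma subst_diaLe s l a : subst s (diaLe l a) = diaLe l (subst s a).
Proof. rewrite /diaLe; elim: (iota 0 l.+1) => //= j e ->; by rewrite subst_diaPow. Qed.

Lemma subst_boxStar s l a : subst s (boxStar l a) = boxStar l (subst s a).
Proof. change (Not (subst s (diaLe l (Not a))) = Not (diaLe l (Not (subst s a)))); by rewrite subst_diaLe. Qed.

Lemma subst_Bh_S s m h : subst s (@Bh n m h.+1) =
  Imp (s h.+1) (boxStar m (Or (diaStar m (s h.+1)) (subst s (Bh n m h)))).
Proof.
change (Imp (s h.+1) (subst s (boxStar m (Or (diaStar m (Var h.+1)) (Bh n m h)))) =
  Imp (s h.+1) (boxStar m (Or (diaStar m (s h.+1)) (subst s (Bh n m h))))).
rewrite subst_boxStar; congr (Imp _ (boxStar _ _)).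
change (Or (subst s (diaLe m (Var h.+1))) (subst s (Bh n m h)) = Or (diaLe m (s h.+1)) (subst s (Bh n m h))).
by rewrite subst_diaLe.
Qed.

Lemma kform_subst_Bh k s m h : (forall j, 0 < j <= h -> kform k (s j)) ->
  kform k (subst s (@Bh n m h)).
Proof.
elim: h => [//|h IH] Hs; rewrite subst_Bh_S.
have Hh : kform k (s h.+1) by apply: Hs; rewrite ltnSn.
change (kform k (s h.+1) && kform k (boxStar m (Or (diaStar m (s h.+1)) (subst s (Bh n m h))))).
rewrite Hh kform_boxStar //.
change ((kform k (diaLe m (s h.+1)) && true) && kform k (subst s (Bh n m h))).
rewrite kform_diaLe // IH // => j /andP [H1 H2].
by apply: Hs; rewrite H1 ltnW.
Qed.

Lemma subst_Bh_agree s s' m h : (forall j, 0 < j <= h -> s j = s' j) ->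
  subst s (@Bh n m h) = subst s' (Bh n m h).
Proof.
elim: h => [//|h IH] Hs; rewrite !subst_Bh_S.
have -> : s h.+1 = s' h.+1 by apply: Hs; rewrite ltnSn.
rewrite IH // => j /andP [H1 H2]; by apply: Hs; rewrite H1 ltnW.
Qed.

Lemma kform_subst k s a : (forall j, kform k (s j)) -> kform k (subst s a).
Proof. move=> Hs; elim: a => [j|//|b Hb c Hc|i b Hb] /=; by rewrite ?Hb ?Hc. Qed.

Lemma subst_comp s s' a : subst s (subst s' a) = subst (fun j => subst s (s' j)) a.
Proof. by elim: a => //= [b -> c ->|i b ->]. Qed.

Lemma subst_id_k k a : kform k a -> subst (fun j => if kvar k j then Var j else Bot) a = a.
Proof. elim: a => //= [j -> //|b IHb c IHc /andP [/IHb -> /IHc ->]|i b IH /IH ->] //. Qed.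
End Syn.
Lemma In_mem (T : eqType) (x : T) (s : seq T) : x \in s -> List.In x s.
Proof. elim: s => //= y s IH; rewrite in_cons => /orP [/eqP ->|/IH]; by [left|right]. Qed.

Lemma mem_In (T : eqType) (x : T) (s : seq T) : List.In x s -> x \in s.
Proof. elim: s => //= y s IH [->|/IH]; rewrite in_cons ?eqxx // => ->; exact: orbT. Qed.

Section Canon.
Variable n : nat.
Variable L : form n -> Prop.
Hypothesis HL : normal_logic L.
Variable k : option nat.
Variable m : nat.
Hypothesis Hpt : pt_at L m.
Implicit Types (a b c : form n) (s t : seq (form n)).

Local Notation pt := (fW (canon L k)).

Lemma bigOr_map_mono (I : Type) (f g : I -> form n) (e : seq I) :
  (forall j, L (Imp (f j) (g j))) -> L (Imp (bigOr (map f e)) (bigOr (map g e))).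
Proof.
move=> H; elim: e => [|j e IH]; first by apply: (taut_L HL) => v.
have := taut_mp2 HL _ (H j) IH; apply=> v.
btaut.
Qed.

Lemma diaAll_mono a b : L (Imp a b) -> L (Imp (diaAll a) (diaAll b)).
Proof. move=> H; apply: bigOr_map_mono => j; exact: dia_mono. Qed.

Lemma diaPow_mono l a b : L (Imp a b) -> L (Imp (diaPow l a) (diaPow l b)).
Proof. rewrite !diaPow_iter; elim: l => //= l IH H; exact: diaAll_mono (IH H). Qed.

Lemma pt_inst a : L (Imp (diaPow m.+1 a) (diaLe m a)).
Proof.
have H := Lsub HL (fun _ : nat => a) Hpt.
change (L (Imp (subst (fun _ => a) (diaPow m.+1 (Var 0))) (subst (fun _ => a) (diaLe m (Var 0))))) in H.
by rewrite subst_diaPow subst_diaLe in H.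
Qed.

Lemma pt_mcs (y : pt) : mcs L k (sval y). Proof. exact: svalP y. Qed.

Lemma pt_diaAll (y : pt) a : kform k a -> (sval y (diaAll a) <-> exists j, sval y (Dia j a)).
Proof.
move=> Ha; rewrite /diaAll (mcs_bigOr HL (pt_mcs y)); last exact: kform_diaAll.
split.
  by move=> [b [/inlist_map [j [<- _]] Hb]]; exists j.
move=> [j Hj]; exists (Dia j a); split=> //; apply/inlist_map; exists j; split=> //.
apply: In_mem; exact: mem_enum.
Qed.

Lemma pt_box (y z : pt) j a : canon_rel k j (sval y) (sval z) -> sval y (Box j a) -> sval z a.
Proof.
move=> Hr Hb; have Ha : kform k a by have := mcs_k (pt_mcs y) Hb.
apply: NNPP => Hna.
have Hz : sval z (Not a) by case: (mcs_neg HL (pt_mcs z) Ha).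
have H1 := Hr _ (mcs_k (pt_mcs z) Hz) Hz.
have H2 : sval y (Box j (Not (Not a))).
  apply: (@mcs_closed _ _ HL _ _ (pt_mcs y) [:: Box j a]); first by move=> b [<-|].
  have H3 : L (Imp a (Not (Not a))) by apply: (taut_L HL) => v; btaut.
  have := box_mono HL j H3; apply: (taut_mp HL) => v; btaut.
  by rewrite /= Ha.
exact: (@mcs_cons2 _ _ HL _ _ (pt_mcs y) (Box j (Not (Not a))) H2 H1).
Qed.

Lemma pt_dia (y z : pt) j a : canon_rel k j (sval y) (sval z) -> sval z a -> sval y (Dia j a).
Proof. move=> Hr Ha; exact: (Hr a (mcs_k (pt_mcs z) Ha) Ha). Qed.

Lemma pt_eq (x w : pt) : (forall a, sval x a -> sval w a) -> w = x.
Proof.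
move=> H; apply: sig_eqP; apply: functional_extensionality => a.
apply: propositional_extensionality; split; last exact: H.
move=> Hw; apply: NNPP => Hx.
have Hk := mcs_k (pt_mcs w) Hw.
have Hn : sval x (Not a) by case: (mcs_neg HL (pt_mcs x) Hk).
exact: (@mcs_cons2 _ _ HL _ _ (pt_mcs w) a Hw (H _ Hn)).
Qed.

Lemma succ_ex (y : pt) j (D : form n -> Prop) : (forall a, D a -> kform k a) ->
  (forall t, subP D t -> exists d, sval y (Dia j d) /\ L (Imp d (bigAnd t))) ->
  exists z : pt, (forall a, D a -> sval z a) /\ canon_rel k j (sval y) (sval z).
Proof.
move=> HDk HD.
pose G := fun b => sval y (Box j b) \/ D b.
have HGk : forall a, G a -> kform k a.
  by move=> a [/(mcs_k (pt_mcs y))|/HDk].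
have HG : Lconsistent L G.
  move=> u /split_list [u0 [u1 [H0 [H1 H01]]]] Hu.
  have [d [Hd Hdu]] := HD u1 H1.
  have H2 : L (Imp (bigAnd u0) (Not d)).
    apply: (taut_mp2 HL) Hu Hdu => v.
    move: (H01 v); btaut.
  have H3 := box_mono HL j H2.
  have H4 := box_bigAnd HL j u0.
  have Hb : sval y (Box j (Not d)).
    apply: (mcs_closed HL (pt_mcs y) (s := map (Box j) u0)).
    - by move=> b /inlist_map [c [<- /inlist_In Hc]]; apply: H0; apply/inlist_In.
    - apply: (taut_mp2 HL) H4 H3 => v; btaut.
    - by have := mcs_k (pt_mcs y) Hd; rewrite /= !andbT.
  exact: (@mcs_cons2 _ _ HL _ _ (pt_mcs y) (Box j (Not d)) Hb Hd).
have [z [Hz HGz]] := lindenbaum HG HGk.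
exists (exist _ z Hz); split; first by move=> a Ha; apply: HGz; right.
move=> psi Hk Hpsi /=.
have Hk' : kform k (Dia j psi) by rewrite /= Hk.
case: (mcs_neg HL (pt_mcs y) Hk') => // Hn; exfalso.
have Hb : sval y (Box j (Not psi)).
  apply: (mcs_closed HL (pt_mcs y) (s := [:: Not (Dia j psi)])); first by move=> b [<-|].
  by apply: (taut_L HL) => v; btaut.
  by rewrite /= Hk.
have := HGz _ (or_introl Hb) => Hz2.
exact: (@mcs_cons2 _ _ HL _ _ Hz psi Hpsi Hz2).
Qed.


Fixpoint Rp (l : nat) (y z : pt) : Prop :=
  match l with
  | 0 => y = z
  | l'.+1 => exists y' j, canon_rel k j (sval y) (sval y') /\ Rp l' y' z
  end.

Lemma Rp_rstar l (y z : pt) : Rp l y z -> Rstar y z.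
Proof.
elim: l y => [|l IH] y /=; first by move=> ->; apply: rtc_refl.
move=> [y' [j [H1 H2]]]; apply: rtc_step (IH _ H2); by exists j.
Qed.

Lemma rstar_Rp (y z : pt) : Rstar y z -> exists l, Rp l y z.
Proof.
elim=> [c|c d e [j Hj] _ [l Hl]]; first by exists 0.
by exists l.+1, d, j.
Qed.

Lemma Rp_dia l (y z : pt) a : Rp l y z -> sval z a -> sval y (diaPow l a).
Proof.
elim: l y => [|l IH] y; first by move=> /= ->.
move=> [y' [j [H1 H2]]] Ha; rewrite diaPow_S.
have Hy' := IH _ H2 Ha.
have Hk : kform k (diaPow l a) := mcs_k (pt_mcs y') Hy'.
apply/(pt_diaAll y Hk); exists j; exact: pt_dia H1 Hy'.
Qed.

Lemma pt_diaLe_intro (y : pt) a i : kform k a -> i <= m -> sval y (diaPow i a) -> sval y (diaLe m a).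
Proof.
move=> Ha Hi Hy; apply/(mcs_bigOr HL (pt_mcs y)); first exact: kform_diaLe.
exists (diaPow i a); split=> //; apply/inlist_map; exists i; split=> //.
by apply: In_mem; rewrite mem_iota add0n ltnS.
Qed.

Lemma pt_diaLe_elim (y : pt) a : kform k a -> sval y (diaLe m a) -> exists i, i <= m /\ sval y (diaPow i a).
Proof.
move=> Ha /(mcs_bigOr HL (pt_mcs y) (kform_diaLe m Ha)) [b [/inlist_map [i [<- Hi]] Hb]].
by exists i; split=> //; move: (mem_In Hi); rewrite mem_iota add0n ltnS.
Qed.

Lemma dia_reduce l (y : pt) a : kform k a -> sval y (diaPow l a) -> sval y (diaLe m a).
Proof.
move=> Ha; elim: l {-2}l (leqnn l) y => [|N IH] l Hl y Hy.
  by move: Hl; rewrite leqn0 => /eqP El; subst l; apply: (pt_diaLe_intro Ha (leq0n m)).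
case: (leqP l m) => Hlm; first exact: pt_diaLe_intro Hlm Hy.
have El : l = m.+1 + (l - m.+1) by rewrite subnKC.
move: Hy; rewrite El diaPow_add => Hy.
have Hr : kform k (diaPow (l - m.+1) a) by apply: kform_diaPow.
have Hy2 : sval y (diaLe m (diaPow (l - m.+1) a)).
  apply: (mcs_closed HL (pt_mcs y) (s := [:: diaPow m.+1 (diaPow (l - m.+1) a)])).
  - by move=> b [<-|].
  - have := pt_inst (diaPow (l - m.+1) a); apply: (taut_mp HL) => v; btaut.
  - exact: kform_diaLe.
have [i [Him Hi]] := pt_diaLe_elim Hr Hy2.
rewrite -diaPow_add in Hi.
apply: (IH (i + (l - m.+1))) Hi.
lia.
Qed.

Lemma bigAnd_cat_impl s1 s2 : L (Imp (bigAnd (s1 ++ s2)) (bigAnd s1)) /\ L (Imp (bigAnd (s1 ++ s2)) (bigAnd s2)).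
Proof.
split; apply: (taut_L HL) => v /=; rewrite peval_bigAnd_cat; btaut.
Qed.

Lemma conj_trick (I : Type) (J : seq I) (F : I -> form n -> form n) (y : pt) (G : form n -> Prop) :
  (forall i a b, L (Imp a b) -> L (Imp (F i a) (F i b))) ->
  (forall i a, kform k a -> kform k (F i a)) ->
  (forall a, G a -> kform k a) ->
  (forall s, subP G s -> exists i, List.In i J /\ sval y (F i (bigAnd s))) ->
  exists i, List.In i J /\ forall s, subP G s -> sval y (F i (bigAnd s)).
Proof.
move=> Hmono Hk HG H; apply: NNPP => Hno.
have Hall : forall J', (forall i, List.In i J' -> List.In i J) ->
   exists s, subP G s /\ forall i, List.In i J' -> ~ sval y (F i (bigAnd s)).
  elim=> [|i J' IH] HJ; first by exists [::]; split=> // a [].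
  have [s' [Hs' Hs'n]] := IH (fun i0 Hi0 => HJ i0 (or_intror Hi0)).
  have [s1 [Hs1 Hs1n]] : exists s1, subP G s1 /\ ~ sval y (F i (bigAnd s1)).
    apply: NNPP => Hc; apply: Hno; exists i; split; first by apply: HJ; left.
    move=> s Hs; apply: NNPP => Hn; apply: Hc; by exists s.
  exists (s1 ++ s'); split; first by apply/subP_cat.
  have [C1 C2] := bigAnd_cat_impl s1 s'.
  move=> i0 [<-|Hi0] Hy.
    apply: Hs1n; apply: (mcs_closed HL (pt_mcs y) (s := [:: F i (bigAnd (s1 ++ s'))])).
    - by move=> b [<-|].
    - have := Hmono i _ _ C1; apply: (taut_mp HL) => v; btaut.
    - apply: Hk; apply/kform_bigAnd => a /Hs1 /HG //.
  apply: (Hs'n i0 Hi0); apply: (mcs_closed HL (pt_mcs y) (s := [:: F i0 (bigAnd (s1 ++ s'))])).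
  - by move=> b [<-|].
  - have := Hmono i0 _ _ C2; apply: (taut_mp HL) => v; btaut.
  - apply: Hk; apply/kform_bigAnd => a /Hs' /HG //.
have [s [Hs Hsn]] := Hall J (fun i Hi => Hi).
have [i [Hi Hyi]] := H s Hs.
exact: Hsn i Hi Hyi.
Qed.
Lemma kform_Dia j a : kform k (Dia j a) = kform k a.
Proof. by rewrite /= !andbT. Qed.

Lemma kform_diaLe_inv a : kform k (diaLe m a) -> kform k a.
Proof.
move/kform_bigOr => H; apply: (H (diaPow 0 a)); apply/inlist_map; exists 0; split=> //.
by left.
Qed.

Lemma ex_path (G : form n -> Prop) (HGk : forall a, G a -> kform k a) l (y : pt) :
  (forall s, subP G s -> sval y (diaPow l (bigAnd s))) ->
  exists z : pt, (forall a, G a -> sval z a) /\ Rp l y z.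
Proof.
have HGs : forall s, subP G s -> kform k (bigAnd s).
  by move=> s Hs; apply/kform_bigAnd => a /Hs /HGk.
elim: l y => [|l IH] y H.
  exists y; split=> // a Ha.
  have Ha1 : subP G [:: a] by move=> b [<-|].
  have := H [:: a] Ha1; move/(mcs_bigAnd HL (pt_mcs y) (HGs _ Ha1)) => Hs.
  by apply: Hs; left.
have [j [_ Hj]] := @conj_trick _ (enum 'I_n) (fun j a => Dia j (diaPow l a)) y G
  (fun j a b Hab => dia_mono HL j (diaPow_mono l Hab))
  (fun j a Ha => ltac:(rewrite kform_Dia; exact: kform_diaPow)) HGk
  (fun s Hs => ltac:(
     have := H s Hs; rewrite diaPow_S;
     move/(pt_diaAll y (kform_diaPow l (HGs _ Hs))) => [j Hj];
     exists j; split=> //; apply: In_mem; exact: mem_enum)).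
pose D := fun b => exists s, subP G s /\ b = diaPow l (bigAnd s).
have HDk : forall a, D a -> kform k a by move=> a [s [Hs ->]]; apply: kform_diaPow; apply: HGs.
have HDt : forall t, subP D t -> exists s, subP G s /\ L (Imp (diaPow l (bigAnd s)) (bigAnd t)).
  elim=> [|e t IHt] Ht.
    by exists [::]; split; [move=> ? []|apply: (taut_L HL) => v; btaut].
  have [s' [Hs' Ls']] := IHt (fun a Ha => Ht a (or_intror Ha)).
  have [se [Hse Ee]] := Ht e (or_introl erefl).
  exists (se ++ s'); split; first by apply/subP_cat.
  have [C1 C2] := bigAnd_cat_impl se s'.
  have M1 := diaPow_mono l C1; have M2 := diaPow_mono l C2.
  have M3 : L (Imp (diaPow l (bigAnd (se ++ s'))) (bigAnd t)).
    by apply: (taut_mp2 HL _ M2 Ls') => v; btaut.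
  rewrite Ee; apply: (taut_mp2 HL _ M1 M3) => v.
  change (peval v (Imp (diaPow l (bigAnd (se ++ s'))) (diaPow l (bigAnd se))) ->
    peval v (Imp (diaPow l (bigAnd (se ++ s'))) (bigAnd t)) ->
    peval v (Imp (diaPow l (bigAnd (se ++ s'))) (And (diaPow l (bigAnd se)) (bigAnd t)))).
  btaut.
have [z [HzD Hyz]] := succ_ex HDk (fun t Ht =>
   let: ex_intro s (conj Hs Ls) := HDt t Ht in ex_intro _ _ (conj (Hj s Hs) Ls)).
have [w [Hw Hzw]] := IH z (fun s Hs => HzD _ (ex_intro _ s (conj Hs erefl))).
by exists w; split=> //; exists z, j.
Qed.

Lemma dstar_intro (y z : pt) a : Rstar y z -> sval z a -> sval y (diaStar m a).
Proof.
move=> /rstar_Rp [l Hl] Ha; exact: (dia_reduce (mcs_k (pt_mcs z) Ha) (Rp_dia Hl Ha)).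
Qed.

Lemma dstar_elim (y : pt) a : sval y (diaStar m a) -> exists z : pt, Rstar y z /\ sval z a.
Proof.
move=> H; have Ha := kform_diaLe_inv (mcs_k (pt_mcs y) H).
have [i [_ Hi]] := pt_diaLe_elim Ha H.
have Hpre : forall s, subP (fun b => b = a) s -> sval y (diaPow i (bigAnd s)).
  move=> s Hs.
  have Hs' : L (Imp a (bigAnd s)).
    apply: (taut_L HL) => v /=; apply/implyP => Hv.
    by apply/peval_bigAnd => b /Hs ->.
  apply: (mcs_closed HL (pt_mcs y) (s := [:: diaPow i a])); first by move=> b [<-|].
    have := diaPow_mono i Hs'; apply: (taut_mp HL) => v; btaut.
  by apply: kform_diaPow; apply/kform_bigAnd => b /Hs ->.
have [z [Hz Hyz]] := @ex_path (fun b => b = a)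
  (fun b (Hb : b = a) => eq_ind_r (fun c => kform k c) Ha Hb) i y Hpre.
by exists z; split; [exact: Rp_rstar Hyz|exact: Hz].
Qed.

Lemma dstar_sep (x y : pt) : ~ Rstar y x -> exists chi, sval x chi /\ ~ sval y (diaStar m chi).
Proof.
move=> Hn; apply: NNPP => Hc.
have Hall : forall chi, sval x chi -> sval y (diaStar m chi).
  by move=> chi Hchi; apply: NNPP => Hn2; apply: Hc; exists chi.
have Hxk : forall a, sval x a -> kform k a by move=> a Ha; exact: (mcs_k (pt_mcs x) Ha).
have Hks : forall s, subP (sval x) s -> kform k (bigAnd s).
  by move=> s Hs; apply/kform_bigAnd => a /Hs /Hxk.
have Hhyp : forall s, subP (sval x) s -> exists i, List.In i (iota 0 m.+1) /\ sval y (diaPow i (bigAnd s)).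
  move=> s Hs.
  have Hxs : sval x (bigAnd s) by apply/(mcs_bigAnd HL (pt_mcs x) (Hks _ Hs)).
  have [i [Him Hyi]] := pt_diaLe_elim (Hks _ Hs) (Hall _ Hxs).
  exists i; split=> //; apply: In_mem; by rewrite mem_iota add0n ltnS.
have [i [_ Hi]] := @conj_trick _ (iota 0 m.+1) (fun i a => diaPow i a) y (sval x)
  (fun i a b Hab => diaPow_mono i Hab) (fun i a Ha => kform_diaPow i Ha) Hxk Hhyp.
have [w [Hw Hyw]] := ex_path Hxk Hi.
apply: Hn; rewrite -(pt_eq Hw); exact: Rp_rstar Hyw.
Qed.


Lemma kform_Or a b : kform k (Or a b) = kform k a && kform k b.
Proof. by rewrite /= andbT. Qed.
Lemma kform_Not a : kform k (Not a) = kform k a.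
Proof. by rewrite /= andbT. Qed.

Definition goodpsi h (psi : nat -> form n) := forall j, 0 < j <= h -> kform k (psi j).

Lemma goodpsi_S h psi : goodpsi h.+1 psi -> goodpsi h psi.
Proof. by move=> H j /andP [H1 H2]; apply: H; rewrite H1 ltnW. Qed.

Lemma Bh_spath h : forall (x : pt) psi, goodpsi h psi ->
  ~ sval x (subst psi (Bh n m h)) -> spath x h.
Proof.
elim: h => [//|h IH] x psi Hg Hn.
have Kp : kform k (psi h.+1) by apply: Hg; rewrite ltnSn.
have KB : kform k (subst psi (Bh n m h)) by apply: kform_subst_Bh; apply: goodpsi_S.
have KD : kform k (diaStar m (psi h.+1)) by apply: kform_diaLe.
have Kc : kform k (Or (diaStar m (psi h.+1)) (subst psi (Bh n m h))) by rewrite kform_Or KD KB.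
have Kbox := kform_boxStar m Kc.
move: Hn; rewrite subst_Bh_S (mcs_imp HL (pt_mcs x) Kp Kbox) => Hn.
have [Hxp Hnb] : sval x (psi h.+1) /\ ~ sval x (boxStar m (Or (diaStar m (psi h.+1)) (subst psi (Bh n m h)))).
  split.
    by apply: NNPP => H; apply: Hn => H2; case: H.
  by move=> H; apply: Hn => _.
have KNc : kform k (Not (Or (diaStar m (psi h.+1)) (subst psi (Bh n m h)))) by rewrite kform_Not Kc.
have KdN : kform k (diaStar m (Not (Or (diaStar m (psi h.+1)) (subst psi (Bh n m h))))) by apply: kform_diaLe.
have Hd : sval x (diaStar m (Not (Or (diaStar m (psi h.+1)) (subst psi (Bh n m h))))).
  by case: (mcs_neg HL (pt_mcs x) KdN) => // H; case: Hnb.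
have [z [Hxz Hz]] := dstar_elim Hd.
move: Hz; rewrite (mcs_not HL (pt_mcs z) Kc) (mcs_or HL (pt_mcs z) KD KB) => Hz.
exists z; split=> //; split.
  by move=> Hzx; apply: Hz; left; apply: dstar_intro Hzx Hxp.
by apply: (IH z psi (goodpsi_S Hg)) => H; apply: Hz; right.
Qed.

Lemma spath_Bh h : forall (x : pt), spath x h ->
  exists psi, goodpsi h psi /\ ~ sval x (subst psi (Bh n m h)).
Proof.
elim: h => [|h IH] x.
  by move=> _; exists (fun _ => Bot); split=> // ; apply: (mcs_bot HL (pt_mcs x)).
move=> [z [Hxz [Hzx Hz]]].
have [psi [Hg Hnz]] := IH z Hz.
have [chi [Hchi Hnd]] := dstar_sep Hzx.
have Kchi : kform k chi := mcs_k (pt_mcs x) Hchi.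
pose psi' := fun j => if j == h.+1 then chi else psi j.
have Hg' : goodpsi h.+1 psi'.
  move=> j /andP [H1 H2]; rewrite /psi'; case: eqP => // Ej.
  by apply: Hg; rewrite H1 /=; move: H2; rewrite leq_eqVlt => /orP [/eqP //|].
exists psi'; split=> //.
have EB : subst psi' (Bh n m h) = subst psi (Bh n m h).
  apply: subst_Bh_agree => j /andP [H1 H2]; rewrite /psi'.
  by case: eqP => // Ej; move: H2; rewrite Ej ltnn.
rewrite subst_Bh_S EB {1 2}/psi' eqxx => Himp.
have KB : kform k (subst psi (Bh n m h)) by apply: kform_subst_Bh.
have KD : kform k (diaStar m chi) by apply: kform_diaLe.
have Kc : kform k (Or (diaStar m chi) (subst psi (Bh n m h))) by rewrite kform_Or KD KB.
have Hbox := mcs_mp HL (pt_mcs x) Himp Hchi.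
have Hzc : sval z (Not (Or (diaStar m chi) (subst psi (Bh n m h)))).
  apply/(mcs_not HL (pt_mcs z) Kc); rewrite (mcs_or HL (pt_mcs z) KD KB).
  by case.
have := dstar_intro Hxz Hzc => Hd.
exact: (@mcs_cons2 _ _ HL _ _ (pt_mcs x) _ Hd Hbox).
Qed.

Lemma Bh_iff (x : pt) h : (forall psi, goodpsi h psi -> sval x (subst psi (Bh n m h))) <-> ~ spath x h.
Proof.
split.
  by move=> H /spath_Bh [psi [Hg Hn]]; apply: Hn; apply: H.
move=> Hn psi Hg; apply: NNPP => H; apply: Hn; exact: Bh_spath Hg H.
Qed.

Lemma ext_normal B : normal_logic (ext L B).
Proof.
case: HL => H1 H2 H3 H4 H5; split.
- by move=> a Ha; apply: ext_L; apply: H1.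
- by move=> i; apply: ext_L.
- exact: ext_MP.
- exact: ext_Nec.
- exact: ext_Sub.
Qed.

Lemma mcs_ext_L B x : mcs (ext L B) k x -> mcs L k x.
Proof.
move=> Hx; have HN := ext_normal B.
split.
- exact: mcs_k Hx.
- move=> s Hs HLs; apply: (mcs_cons Hx Hs); exact: ext_L.
- move=> a Ka Hna Hc.
  have Hn : x (Not a) by case: (mcs_neg HN Hx Ka).
  apply: (Hc [:: Not a; a]); first by move=> b [<-|[<-|[]]]; [left|right].
  by apply: (taut_L HL) => v; btaut.
Qed.

Lemma good_ext h phi : ext L (Bh n m h) phi -> forall sigma, (forall j, kform k (sigma j)) ->
  forall y : pt, ~ spath y h -> sval y (subst sigma phi).
Proof.
elim=> [a Ha| |a b _ IH1 _ IH2|i a _ IH|s a _ IH] sigma Hs y Hy.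
- exact: (mcs_L HL (pt_mcs y) (Lsub HL sigma Ha) (kform_subst _ Hs)).
- exact: (proj2 (Bh_iff y h) Hy sigma (fun j _ => Hs j)).
- exact: (mcs_mp HL (pt_mcs y) (IH1 _ Hs _ Hy) (IH2 _ Hs _ Hy)).
- rewrite /=; apply: NNPP => Hnb.
  have Ka : kform k (subst sigma a) by apply: kform_subst.
  pose D := fun b => b = Not (subst sigma a).
  have HDk : forall b, D b -> kform k b by move=> b ->; rewrite /= Ka.
  have Hdia : sval y (Dia i (Not (subst sigma a))).
    have Kb : kform k (Box i (Not (Not (subst sigma a)))) by rewrite /= Ka.
    case: (mcs_neg HL (pt_mcs y) Kb) => // Hb; exfalso; apply: Hnb.
    apply: (mcs_closed HL (pt_mcs y) (s := [:: Box i (Not (Not (subst sigma a)))])).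
    + by move=> b [<-|].
    + have H3 : L (Imp (Not (Not (subst sigma a))) (subst sigma a)) by apply: (taut_L HL) => v; btaut.
      have := box_mono HL i H3; apply: (taut_mp HL) => v; btaut.
    + by rewrite /= Ka.
  have HDt : forall t, subP D t -> L (Imp (Not (subst sigma a)) (bigAnd t)).
    move=> t Ht; apply: (taut_L HL) => v; rewrite [peval v (Imp _ _)]/=; apply/implyP => Hv.
    by apply/peval_bigAnd => b /Ht ->.
  have [z [HzD Hyz]] := succ_ex HDk (fun t Ht => ex_intro _ (Not (subst sigma a)) (conj Hdia (HDt t Ht))).
  have Hz : ~ spath z h.
    move=> Hsz; apply: Hy; apply: spath_pre Hsz; apply: rtc_one; by exists i.
  exact: (@mcs_cons2 _ _ HL _ _ (pt_mcs z) _ (IH _ Hs _ Hz) (HzD _ erefl)).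
- rewrite subst_comp; apply: IH => // j; exact: kform_subst.
Qed.

End Canon.
Unset Implicit Arguments.
Theorem proposition3p4 (n : nat) (L : form n -> Prop) (k : option nat) (m : nat) :
  normal_logic L -> consistent_logic L -> pretransitive L -> least_pt L m ->
  (* (1) *)
  (forall (x : fW (canon L k)) (h : nat),
     depth_le x h <->
     (forall psi : nat -> form n, (forall j, 0 < j <= h -> kform k (psi j)) ->
        sval x (subst psi (@Bh n m h))))
  /\
  (* (2): canon (L[h]) k coincides with (canon L k)^{(h)} *)
  (forall h, 0 < h ->
     (forall x : form n -> Prop,
        mcs (ext L (@Bh n m h)) k x <->
        exists w : fW (restrict_depth (canon L k) h), sval (sval w) = x)
     /\
     (forall (a b : fW (canon (ext L (@Bh n m h)) k))
             (a' b' : fW (restrict_depth (canon L k) h)) (i : 'I_n),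
        sval a = sval (sval a') -> sval b = sval (sval b') ->
        (fR (canon (ext L (@Bh n m h)) k) i a b <->
         fR (restrict_depth (canon L k) h) i a' b'))).
Proof.
move=> HL _ _ [Hpt _].
have P1 : forall (x : fW (canon L k)) (h : nat), depth_le x h <->
     (forall psi : nat -> form n, (forall j, 0 < j <= h -> kform k (psi j)) ->
        sval x (subst psi (@Bh n m h))).
  move=> x h; rewrite depth_iff; split.
    by move=> Hn; apply/(Bh_iff HL Hpt x h).
  by move=> H; apply/(Bh_iff HL Hpt x h).
split=> // h Hh; split; last first.
  by move=> a b a' b' i Ea Eb; rewrite /= Ea Eb.
move=> x; split.
  move=> Hx; have HxL := mcs_ext_L HL Hx.
  pose w0 : fW (canon L k) := exist _ x HxL.
  have Hd : depth_le w0 h.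
    apply/P1 => psi Hg.
    apply: (mcs_L (ext_normal HL _) Hx); first by apply: ext_Sub; apply: ext_A.
    exact: kform_subst_Bh.
  by exists (exist _ w0 Hd).
move=> [[y Hd] <-] /=.
have Hns : ~ spath y h by apply/depth_iff.
have Hy := svalP y.
split.
- exact: mcs_k Hy.
- move=> t Ht Hext.
  pose sg := fun j => if kvar k j then @Var n j else Bot.
  have Hsg : forall j, kform k (sg j) by move=> j; rewrite /sg; case: ifP.
  have Kt : kform k (bigAnd t) by apply/kform_bigAnd => a /Ht /(mcs_k Hy).
  have := good_ext HL Hpt Hext Hsg Hns.
  rewrite subst_id_k; last by rewrite /= Kt.
  move=> Hn; apply: (@mcs_cons2 _ _ HL _ _ Hy (bigAnd t)) Hn.
  exact/(mcs_bigAnd HL Hy Kt).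
- move=> a Ka Hna Hc; case: Hy => _ _ Hmax; apply: (Hmax a Ka Hna) => s Hs HLs.
  by apply: (Hc s Hs); apply: ext_L.
Qed.
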